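(* For every positive integer $\ell$ there exists a (finite) squaregraph $G$ such that for every graph $H$ and every path $P$, if $G$ is isomorphic to a subgraph of $H\boxtimes P\boxtimes K_\ell$, then $H$ contains a cycle of length at most $6$.
   Context: A squaregraph is a plane graph in which every bounded face is bounded by a $4$-cycle and every vertex not on the outer face has degree at least $4$. $K_\ell$ is the complete graph on $\ell$ vertices. The strong product $G\boxtimes H$ has vertex set $V(G)\times V(H)$ with $(v,w)\sim(v',w')$ if ($v=v'$ and $ww'\in E(H)$) or ($w=w'$ and $vv'\in E(G)$) or ($vv'\in E(G)$ and $ww'\in E(H)$). *)

(* Defs.v *)
From mathcomp Require Import all_boot.

Set Implicit Arguments.
Unset Strict Implicit.
Unset Printing Implicit Defensive.

Definition simple_graph (T : finType) (e : rel T) : Prop :=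
  symmetric e /\ irreflexive e.

Definition strong_prod (A B : finType) (eA : rel A) (eB : rel B) : rel (A * B) :=
  fun x y => [|| (x.1 == y.1) && eB x.2 y.2,
                 (x.2 == y.2) && eA x.1 y.1
               | eA x.1 y.1 && eB x.2 y.2].

Definition path_graph (n : nat) : rel 'I_n :=
  fun i j => (i.+1 == j :> nat) || (j.+1 == i :> nat).

Arguments path_graph n : clear implicits.

Definition complete_graph (l : nat) : rel 'I_l := fun i j => i != j.

Arguments complete_graph l : clear implicits.

Definition subgraph_iso (VG W : finType) (eG : rel VG) (eW : rel W) : Prop :=
  exists f : VG -> W, injective f /\ (forall u v, eG u v -> eW (f u) (f v)).

Definition has_cycle_le (T : finType) (e : rel T) (k : nat) : Prop :=
  exists s : seq T, [/\ 3 <= size s <= k, uniq s & cycle e s].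

(* rot v is a cyclic permutation of the neighbourhood of v
   (the clockwise order of the edges around v in the embedding). *)
Definition rotation_system (V : finType) (e : rel V) (rot : V -> V -> V) : Prop :=
  forall v,
    [/\ (forall u, e v u -> e v (rot v u)),
        (forall u w, e v u -> e v w -> rot v u = rot v w -> u = w)
      & (forall u w, e v u -> e v w -> exists k, iter k (rot v) u = w)].

Definition darts (V : finType) (e : rel V) : {set V * V} :=
  [set d : V * V | e d.1 d.2].

(* face tracing permutation on darts *)
Definition face_step (V : finType) (rot : V -> V -> V) (d : V * V) : V * V :=
  (d.2, rot d.2 d.1).

Definition face_of (V : finType) (rot : V -> V -> V) (d : V * V) : {set V * V} :=
  [set d' | fconnect (face_step rot) d d'].

(* the set of faces (each face = its set of boundary darts) *)
Definition faces (V : finType) (e : rel V) (rot : V -> V -> V) : {set {set V * V}} :=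
  [set face_of rot d | d in darts e].

Definition face_vertices (V : finType) (f : {set V * V}) : {set V} :=
  [set d.1 | d in f].

Definition connected_graph (V : finType) (e : rel V) : Prop :=
  forall u v, connect e u v.

(* Euler's formula |V| - |E| + |F| = 2, i.e. the rotation system is a
   genus-0 (plane) embedding of the connected graph; |darts| = 2|E|. *)
Definition genus0 (V : finType) (e : rel V) (rot : V -> V -> V) : Prop :=
  (2 * #|V| + 2 * #|faces e rot| = #|darts e| + 4)%N.

Definition squaregraph (V : finType) (e : rel V) : Prop :=
  simple_graph e /\
  exists (rot : V -> V -> V) (o : {set V * V}),
    [/\ rotation_system e rot /\ connected_graph e,
        genus0 e rot,
        o \in faces e rot,
        (forall f, f \in faces e rot -> f != o ->
            #|f| = 4 /\ #|face_vertices f| = 4)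
      & (forall v, v \notin face_vertices o -> 4 <= #|[set u | e v u]|)].

(* Main.v *)
Require Import Defs.
From mathcomp Require Import all_boot zify.
Set Implicit Arguments. Unset Strict Implicit. Unset Printing Implicit Defensive.

Lemma ordS_val d (i : 'I_d) : val (ordS i) = if i.+1 == d then 0 else i.+1.
Proof. rewrite /= ; case: i => i Hi /=; case: eqP => [->|H]; first by rewrite modnn.
by rewrite modn_small //; lia. Qed.

Lemma ord_pred_val d (i : 'I_d) : val (ord_pred i) = if val i == 0 then d.-1 else i.-1.
Proof. case: i => i Hi /=; case: eqP => [->|H] /=.
  by rewrite add0n modn_small //; lia.
have -> : (i + d).-1 = i.-1 + d by lia. by rewrite modnDr modn_small //; lia. Qed.

Lemma ordS_neq d (hd : 1 < d) (i : 'I_d) : (ordS i == i) = false.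
Proof. apply/eqP => /(congr1 val); rewrite ordS_val; case: i => i Hi /=; case: eqP; lia. Qed.
Lemma ord_pred_neq d (hd : 1 < d) (i : 'I_d) : (ord_pred i == i) = false.
Proof. apply/eqP => /(congr1 val); rewrite ord_pred_val; case: i => i Hi /=; case: eqP; lia. Qed.
Lemma ordS_eqE d (i j : 'I_d) : (ordS i == j) = (i == ord_pred j).
Proof. apply/eqP/eqP => [<-|->]; [by rewrite ordSK | by rewrite ord_predK]. Qed.

Lemma cyc_reach d (R : 'I_d -> 'I_d -> Prop) :
  (forall i, R i i) -> (forall i j k, R i j -> R j k -> R i k) ->
  (forall i, R i (ord_pred i)) -> forall i j, R i j.
Proof.
move=> Rr Rt Rp.
have H : forall k (i j : 'I_d), val j + k = val i -> R i j.
  elim=> [|k IH] i j E.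
    by have -> : i = j by apply: val_inj; rewrite /= -E addn0.
  apply: (Rt _ (ord_pred i)) => //; apply: IH.
  rewrite ord_pred_val; case: eqP => /= X; move: E X; case: i => ? ?; case: j => ? ? /=; lia.
move=> i j; have d0 : 0 < d by case: i => ? ?; lia.
pose z := Ordinal d0.
have dm : d.-1 < d by lia.
pose m := Ordinal dm.
apply: (Rt _ z); first by apply: (H i); rewrite /=; lia.
apply: (Rt _ m); first by have -> : m = ord_pred z by apply: val_inj; rewrite ord_pred_val.
by apply: (H (d.-1 - j)); rewrite /=; case: j => j Hj /=; lia.
Qed.

Definition VW (d : nat) := option ('I_d * bool).
Definition uu d (i : 'I_d) : VW d := Some (i, false).
Definition ww d (i : 'I_d) : VW d := Some (i, true).

Definition we d (a b : VW d) : bool :=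
 match a, b with
 | None, Some (_, false) => true
 | Some (_, false), None => true
 | Some (i, false), Some (j, true) => (j == i) || (ordS j == i)
 | Some (j, true), Some (i, false) => (j == i) || (ordS j == i)
 | _, _ => false end.

Definition wrot d (b a : VW d) : VW d :=
 match b with
 | None => if a is Some (i, false) then uu (ord_pred i) else a
 | Some (j, false) => if a == None then ww j else if a == ww j then ww (ord_pred j)
                      else if a == ww (ord_pred j) then None else a
 | Some (j, true) => if a == uu j then uu (ordS j) else if a == uu (ordS j) then uu j else a
 end.

Lemma we_sym d : symmetric (@we d).
Proof. by case=> [[i []]|] [[j []]|]. Qed.
Lemma we_irr d : irreflexive (@we d).
Proof. by case=> [[i []]|]. Qed.


Section R.
Variable d : nat.
Hypothesis hd : 1 < d.
Implicit Types i j : 'I_d.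

Lemma nbr_n (b : VW d) : we None b -> exists i, b = uu i.
Proof. by case: b => [[i []]|] //= _; exists i. Qed.
Lemma nbr_u j (b : VW d) : we (uu j) b -> [\/ b = None, b = ww j | b = ww (ord_pred j)].
Proof. case: b => [[i []]|] //=; last by constructor.
case/orP=> /eqP E; [constructor 2; by rewrite E| constructor 3; by rewrite -E ordSK]. Qed.
Lemma nbr_w j (b : VW d) : we (ww j) b -> b = uu j \/ b = uu (ordS j).
Proof. case: b => [[i []]|] //=. case/orP=> /eqP E; [left|right]; by rewrite -E. Qed.

Lemma uu_inj i j : uu i = uu j -> i = j. Proof. by case. Qed.
Lemma ww_inj i j : ww i = ww j -> i = j. Proof. by case. Qed.
Lemma uu_eq i j : (uu i == uu j) = (i == j). Proof. by apply/eqP/eqP => [/uu_inj|->]. Qed.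
Lemma ww_eq i j : (ww i == ww j) = (i == j). Proof. by apply/eqP/eqP => [/ww_inj|->]. Qed.
Lemma we_n_u i : we None (uu i). Proof. by []. Qed.
Lemma we_u_n i : we (uu i) None. Proof. by []. Qed.
Lemma we_u_w i : we (uu i) (ww i). Proof. by rewrite /= eqxx. Qed.
Lemma we_u_wp i : we (uu i) (ww (ord_pred i)). Proof. by rewrite /= ord_predK eqxx orbT. Qed.
Lemma we_w_u i : we (ww i) (uu i). Proof. by rewrite /= eqxx. Qed.
Lemma we_w_us i : we (ww i) (uu (ordS i)). Proof. by rewrite /= eqxx orbT. Qed.

Lemma rot_n i : wrot None (uu i) = uu (ord_pred i). Proof. by []. Qed.
Lemma rot_u_n i : wrot (uu i) None = ww i. Proof. by []. Qed.
Lemma rot_u_w i : wrot (uu i) (ww i) = ww (ord_pred i). Proof. by rewrite /wrot /= eqxx. Qed.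
Lemma rot_u_wp i : wrot (uu i) (ww (ord_pred i)) = None.
Proof. by rewrite /wrot /= ww_eq ord_pred_neq // eqxx. Qed.
Lemma rot_w_u i : wrot (ww i) (uu i) = uu (ordS i). Proof. by rewrite /wrot /= eqxx. Qed.
Lemma rot_w_us i : wrot (ww i) (uu (ordS i)) = uu i.
Proof. by rewrite /wrot /= uu_eq ordS_neq // eqxx. Qed.

Lemma pred_neq i : ord_pred i <> i. Proof. by move/eqP; rewrite ord_pred_neq. Qed.
Lemma S_neq i : ordS i <> i. Proof. by move/eqP; rewrite ordS_neq. Qed.

Lemma iter_rot_n k i : iter k (wrot None) (uu i) = uu (iter k (@ord_pred d) i).
Proof. by elim: k => //= k ->. Qed.

Lemma rot_sys : rotation_system (@we d) (@wrot d).
Proof.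
move=> v; split.
- case: v => [[j []]|] u.
  + by case/nbr_w=> ->; rewrite ?rot_w_u ?rot_w_us ?we_w_u ?we_w_us.
  + by case/nbr_u=> ->; rewrite ?rot_u_n ?rot_u_w ?rot_u_wp ?we_u_n ?we_u_w ?we_u_wp.
  + by case/nbr_n=> i ->.
- case: v => [[j []]|] u w.
  + case/nbr_w=> ->; case/nbr_w=> ->; rewrite ?rot_w_u ?rot_w_us //.
    all: idtac.
  + move=> H1 H2; case: (nbr_u H1) => ->; case: (nbr_u H2) => ->;
      rewrite ?rot_u_n ?rot_u_w ?rot_u_wp //.
    all: try (move=> H; move: (ww_inj H) => /pred_neq; done).
    all: try (move=> H; move: (ww_inj (esym H)) => /pred_neq; done).
  + move=> H1 H2; case: (nbr_n H1) => i ->; case: (nbr_n H2) => i' ->; rewrite !rot_n.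
    by move=> /uu_inj /ord_pred_inj ->.
- have it1 : forall (T : Type) (f : T -> T) x, iter 1 f x = f x by [].
  have it2 : forall (T : Type) (f : T -> T) x, iter 2 f x = f (f x) by [].
  case: v => [[j []]|] u w.
  + case/nbr_w=> ->; case/nbr_w=> ->; first [by exists 0 | by exists 1; rewrite it1 ?rot_w_u ?rot_w_us].
  + move=> H1 H2; case: (nbr_u H1) => ->; case: (nbr_u H2) => ->;
    first [by exists 0 | by exists 1; rewrite it1 ?rot_u_n ?rot_u_w ?rot_u_wp
          | by exists 2; rewrite it2 ?rot_u_n ?rot_u_w ?rot_u_wp].
  + move=> H1 H2; case: (nbr_n H1) => i ->; case: (nbr_n H2) => i' ->.
    suff [k Hk] : exists k, iter k (@ord_pred d) i = i' by exists k; rewrite iter_rot_n Hk.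
    apply: (@cyc_reach d (fun i i' => exists k, iter k (@ord_pred d) i = i')).
    * by move=> x; exists 0.
    * move=> x y z [k1 <-] [k2 <-]; exists (k2 + k1); by rewrite iterD.
    * by move=> x; exists 1.
Qed.

Lemma conn_all : connected_graph (@we d).
Proof.
have cs := sym_connect_sym (@we_sym d).
have H : forall a : VW d, connect (@we d) a None.
  case=> [[i []]|]; last exact: connect0.
  - apply: (connect_trans (connect1 (we_w_u i))); exact: connect1 (we_u_n i).
  - exact: connect1 (we_u_n i).
move=> a b; apply: (connect_trans (H a)); rewrite cs; exact: H.
Qed.

Definition fs := face_step (@wrot d).
Lemma fsE a b : fs (a, b) = (b, wrot b a). Proof. by []. Qed.
Definition Qs j : {set VW d * VW d} :=
  [set (None, uu j); (uu j, ww j); (ww j, uu (ordS j)); (uu (ordS j), None)].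
Definition isout (x : VW d * VW d) : bool :=
  match x with
  | (Some (i, true), Some (k, false)) => k == i
  | (Some (i, false), Some (k, true)) => k == ord_pred i
  | _ => false end.
Definition Os : {set VW d * VW d} := [set x | isout x].

Lemma fs1 j : fs (None, uu j) = (uu j, ww j). Proof. by rewrite fsE rot_u_n. Qed.
Lemma fs2 j : fs (uu j, ww j) = (ww j, uu (ordS j)). Proof. by rewrite fsE rot_w_u. Qed.
Lemma fs3 j : fs (ww j, uu (ordS j)) = (uu (ordS j), None).
Proof. by rewrite fsE; have := rot_u_wp (ordS j); rewrite ordSK => ->. Qed.
Lemma fs4 j : fs (uu (ordS j), None) = (None, uu j).
Proof. by rewrite fsE rot_n ordSK. Qed.
Lemma fs5 i : fs (ww i, uu i) = (uu i, ww (ord_pred i)). Proof. by rewrite fsE rot_u_w. Qed.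
Lemma fs6 i : fs (uu i, ww (ord_pred i)) = (ww (ord_pred i), uu (ord_pred i)).
Proof. by rewrite fsE; have := rot_w_us (ord_pred i); rewrite ord_predK => ->. Qed.

Lemma fstep x y : fs x = y -> fconnect fs x y.
Proof. by move=> E; apply: connect1; rewrite /= E. Qed.

Lemma isout_W i : isout (ww i, uu i). Proof. by rewrite /= eqxx. Qed.
Lemma isout_U i : isout (uu i, ww (ord_pred i)). Proof. by rewrite /= eqxx. Qed.
Lemma isoutP x : isout x -> exists i, x = (ww i, uu i) \/ x = (uu i, ww (ord_pred i)).
Proof.
case: x => [[[i []]|] [[k []]|]] //= /eqP ->; exists i; by [left | right].
Qed.

Lemma face_Q j x : x \in Qs j -> face_of (@wrot d) x = Qs j.
Proof.
have Hc : forall z, z \in Qs j -> fs z \in Qs j.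
  move=> z; rewrite !inE -!orbA => /or4P [] /eqP ->;
    by rewrite ?fs1 ?fs2 ?fs3 ?fs4 eqxx ?orbT.
have Ha : forall z, z \in Qs j -> fconnect fs (None, uu j) z.
  have c1 := fstep (fs1 j); have c2 := fstep (fs2 j); have c3 := fstep (fs3 j).
  move=> z; rewrite !inE -!orbA => /or4P [] /eqP ->; first exact: connect0.
  - exact: c1.
  - exact: connect_trans c1 c2.
  - exact: connect_trans (connect_trans c1 c2) c3.
have Hb : forall z, z \in Qs j -> fconnect fs z (None, uu j).
  have c1 := fstep (fs2 j); have c2 := fstep (fs3 j); have c3 := fstep (fs4 j).
  move=> z; rewrite !inE -!orbA => /or4P [] /eqP ->; first exact: connect0.
  - exact: connect_trans (connect_trans c1 c2) c3.
  - exact: connect_trans c2 c3.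
  - exact: c3.
move=> Hx; apply/setP => y; rewrite inE; apply/idP/idP.
- move=> /connectP [p Hp ->]; elim: p x Hx Hp => //= z p IH x Hx /andP [/eqP Ez Hp].
  by apply: IH Hp; rewrite -Ez; apply: Hc.
- move=> Hy; exact: connect_trans (Hb _ Hx) (Ha _ Hy).
Qed.

Lemma face_O x : x \in Os -> face_of (@wrot d) x = Os.
Proof.
have Hc : forall z, z \in Os -> fs z \in Os.
  move=> z; rewrite inE => /isoutP [i [] ->]; by rewrite ?fs5 ?fs6 inE ?isout_W ?isout_U.
have HW : forall i j, fconnect fs (ww i, uu i) (ww j, uu j).
  apply: (@cyc_reach d (fun i j => fconnect fs (ww i, uu i) (ww j, uu j))); [move=> ?; exact: connect0 | move=> ? ? ?; exact: connect_trans |].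
  move=> i; exact: connect_trans (fstep (fs5 i)) (fstep (fs6 i)).
move=> Hx; apply/setP => y; rewrite inE; apply/idP/idP.
- move=> /connectP [p Hp ->]; elim: p x Hx Hp => //= z p IH x Hx /andP [/eqP Ez Hp].
  by apply: IH Hp; rewrite -Ez; apply: Hc.
- rewrite inE => /isoutP [b Hb]; move: Hx; rewrite inE => /isoutP [a Ha].
  have Ha' : fconnect fs x (ww (ord_pred a), uu (ord_pred a)).
    case: Ha => ->; last exact: fstep (fs6 a).
    exact: connect_trans (fstep (fs5 a)) (fstep (fs6 a)).
  apply: (connect_trans Ha'); apply: (connect_trans (HW _ b)).
  case: Hb => ->; [exact: connect0 | exact: fstep (fs5 b)].
Qed.

Lemma dart_class x : we x.1 x.2 -> (exists j, x \in Qs j) \/ x \in Os.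
Proof.
case: x => a b /=; case: a => [[k []]|].
- case/nbr_w => ->.
  + by right; rewrite inE isout_W.
  + by left; exists k; rewrite !inE eqxx ?orbT.
- case/nbr_u => ->.
  + by left; exists (ord_pred k); rewrite !inE ord_predK eqxx ?orbT.
  + by left; exists k; rewrite !inE eqxx ?orbT.
  + by right; rewrite inE isout_U.
- case/nbr_n => i ->; by left; exists i; rewrite !inE eqxx.
Qed.

Definition FF (o : option 'I_d) := if o is Some j then Qs j else Os.
Lemma d0 : 0 < d. Proof. by apply: ltn_trans hd. Qed.
Definition j0 : 'I_d := Ordinal d0.

Lemma faces_eq : faces (@we d) (@wrot d) = FF @: setT.
Proof.
apply/setP => F; apply/imsetP/imsetP.
- case=> x; rewrite inE => Hx ->; case: (dart_class Hx) => [[j Hj]|Ho].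
  + by exists (Some j) => //; rewrite (face_Q Hj).
  + by exists None => //; rewrite (face_O Ho).
- case=> [[j|]] _ ->.
  + exists (None, uu j); first by rewrite inE.
    by rewrite (@face_Q j) // !inE eqxx.
  + exists (ww j0, uu j0); first by rewrite inE; exact: (we_w_u j0).
    by rewrite face_O // inE isout_W.
Qed.

Lemma memQ j j' : ((None, uu j) \in Qs j') = (j == j').
Proof. by rewrite !inE /= !xpair_eqE /= ?uu_eq ?andbF ?orbF. Qed.

Lemma FF_inj : injective FF.
Proof.
have Hn : forall j, Qs j <> Os.
  move=> j E; have : (None, uu j) \in Qs j by rewrite memQ.
  by rewrite E inE.
case=> [j|] [j'|] //=.
- move=> E; have : (None, uu j) \in Qs j' by rewrite -E memQ.
  by rewrite memQ => /eqP ->.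
- by move/Hn.
- by move/esym/Hn.
Qed.

Lemma card_faces : #|faces (@we d) (@wrot d)| = d.+1.
Proof. by rewrite faces_eq card_imset ?cardsT ?card_option ?card_ord //; exact: FF_inj. Qed.

Definition gd (x : 'I_d * 'I_6) : VW d * VW d :=
  let j := x.1 in
  match val x.2 with
  | 0 => (None, uu j) | 1 => (uu j, None) | 2 => (uu j, ww j)
  | 3 => (ww j, uu j) | 4 => (ww j, uu (ordS j)) | _ => (uu (ordS j), ww j) end.

Lemma gd_inj : injective gd.
Proof.
case=> j [t Ht] [j' [t' Ht']]; rewrite /gd /=.
do 6 (try (case: t Ht => [|t] Ht)); try by [].
all: do 6 (try (case: t' Ht' => [|t'] Ht')); try by [].
all: move/eqP; rewrite /= ?xpair_eqE /= ?uu_eq ?ww_eq ?andbF ?andbT ?andFb //.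
all: try (move=> /eqP ->; congr pair; exact: val_inj).
all: move=> /andP [/eqP E1 /eqP E2].
all: first [ (rewrite E1; congr pair; exact: val_inj) | (rewrite E2; congr pair; exact: val_inj)
  | (exfalso; subst; first [exact: S_neq E1 | exact: S_neq (esym E1) | exact: S_neq E2 | exact: S_neq (esym E2)])].
Qed.

Lemma darts_eq : darts (@we d) = gd @: setT.
Proof.
apply/setP => x; rewrite inE; apply/idP/imsetP.
- case: x => a b /=; case: a => [[k []]|].
  + case/nbr_w => ->; [by exists (k, inord 3); rewrite // /gd /= inordK |
                       by exists (k, inord 4); rewrite // /gd /= inordK].
  + case/nbr_u => ->.
    * by exists (k, inord 1); rewrite // /gd /= inordK.
    * by exists (k, inord 2); rewrite // /gd /= inordK.
    * by exists (ord_pred k, inord 5); rewrite // /gd /= inordK // ord_predK.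
  + by case/nbr_n => i ->; exists (i, inord 0); rewrite // /gd /= inordK.
- case=> [[j [t Ht]]] _ ->; rewrite /gd /=.
  do 6 (try (case: t Ht => [|t] Ht)); try by [].
  all: by rewrite /= ?eqxx ?orbT.
Qed.

Lemma card_darts : #|darts (@we d)| = d * 6.
Proof. by rewrite darts_eq card_imset ?cardsT ?card_prod ?card_ord //; exact: gd_inj. Qed.
End R.

Lemma uw_eq d (i j : 'I_d) : (uu i == ww j) = false. Proof. by apply/negbTE/eqP; case. Qed.
Lemma wu_eq d (i j : 'I_d) : (ww i == uu j) = false. Proof. by apply/negbTE/eqP; case. Qed.
Lemma un_eq d (i : 'I_d) : (uu i == None) = false. Proof. by apply/negbTE/eqP; case. Qed.
Lemma wn_eq d (i : 'I_d) : (ww i == None) = false. Proof. by apply/negbTE/eqP; case. Qed.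
Lemma nu_eq d (i : 'I_d) : (None == uu i) = false. Proof. by apply/negbTE/eqP; case. Qed.
Lemma nw_eq d (i : 'I_d) : (None == ww i) = false. Proof. by apply/negbTE/eqP; case. Qed.
Lemma Sj_neq d (hd : 1 < d) (j : 'I_d) : (j == ordS j) = false.
Proof. by rewrite eq_sym (ordS_neq hd). Qed.

Lemma card4 (T : finType) (a b c e : T) : uniq [:: a; b; c; e] -> #|[set a; b; c; e]| = 4.
Proof.
move=> U; rewrite -[RHS](card_uniqP U); apply: eq_card => x.
by rewrite !inE -!orbA.
Qed.

Lemma wheel_sq d (hd : 3 < d) : squaregraph (@we d).
Proof.
have h1 : 1 < d by apply: ltn_trans hd.
split; first by split; [exact: we_sym | exact: we_irr].
exists (@wrot d), (Os d); split.
- split; [exact: rot_sys h1 | exact: conn_all].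
- rewrite /genus0 (card_faces h1) (card_darts h1) /VW card_option card_prod card_ord card_bool.
  lia.
- by rewrite (faces_eq h1); apply/imsetP; exists None.
- move=> f; rewrite (faces_eq h1) => /imsetP [[j|] _ ->]; last by rewrite eqxx.
  move=> _; split.
  + apply: card4; rewrite /= !inE /= !xpair_eqE /=.
    by rewrite ?uw_eq ?wu_eq ?un_eq ?wn_eq ?nu_eq ?nw_eq ?uu_eq ?ww_eq ?(Sj_neq h1) ?andbF.
  + rewrite /face_vertices /Qs !imsetU !imset_set1 /=.
    apply: card4; rewrite /= !inE.
    by rewrite ?uw_eq ?wu_eq ?un_eq ?wn_eq ?nu_eq ?nw_eq ?uu_eq ?ww_eq ?(Sj_neq h1) ?andbF.
- move=> v Hv.
  have -> : v = None.
    case: v Hv => [[i []]|] // Hv; exfalso; move/negP: Hv; apply; apply/imsetP.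
    + by exists (ww i, uu i); rewrite // inE isout_W.
    + by exists (uu i, ww (ord_pred i)); rewrite // inE isout_U.
  have -> : [set u | we None u] = [set uu i | i in 'I_d].
    apply/setP => u; rewrite inE; apply/idP/imsetP.
    + by case/nbr_n => i ->; exists i.
    + by case=> i _ ->.
  rewrite card_imset ?card_ord // => i i'; exact: uu_inj.
Qed.

Lemma sp_close (VH : finType) (eH : rel VH) n l (x y : (VH * 'I_n) * 'I_l) :
  strong_prod (strong_prod eH (path_graph n)) (complete_graph l) x y ->
  [/\ (x.1.1 == y.1.1) || eH x.1.1 y.1.1, (x.1.2 : nat) <= y.1.2 + 1 & (y.1.2 : nat) <= x.1.2 + 1].
Proof.
case: x => [[a b] c]; case: y => [[a' b'] c']; rewrite /strong_prod /path_graph /=.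
have Hin : [|| (a == a') && ((b.+1 == b' :> nat) || (b'.+1 == b :> nat)),
    (b == b') && eH a a' | eH a a' && ((b.+1 == b' :> nat) || (b'.+1 == b :> nat))] ->
    [/\ (a == a') || eH a a', (b : nat) <= b' + 1 & (b' : nat) <= b + 1].
  case/or3P => [/andP [-> P]|/andP [/eqP -> ->]|/andP [-> P]]; split; rewrite ?orbT //; lia.
case/or3P => [/andP [E _]|/andP [_ I]|/andP [I _]]; try exact: Hin I.
by move: E; rewrite xpair_eqE => /andP [/eqP -> /eqP ->]; rewrite eqxx; split => //; lia.
Qed.

Lemma card_inj (I : finType) (A : {set I}) (a b : nat) (g : I -> 'I_a * 'I_b) :
  {in A &, injective g} -> #|A| <= a * b.
Proof.
move=> gi; rewrite -(card_in_imset gi); apply: leq_trans (max_card _) _.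
by rewrite card_prod !card_ord.
Qed.

Section E.
Variables (d l n : nat) (VH : finType) (eH : rel VH).
Hypothesis hd : 1 < d.
Hypothesis sH : simple_graph eH.
Hypothesis noC : ~ has_cycle_le eH 6.
Variable f : VW d -> (VH * 'I_n) * 'I_l.
Hypothesis fi : injective f.
Hypothesis fe : forall a b, we a b ->
  strong_prod (strong_prod eH (path_graph n)) (complete_graph l) (f a) (f b).

Let h a := (f a).1.1.
Let p a : nat := (f a).1.2.
Let k a := (f a).2.

Lemma close a b : we a b -> [/\ (h a == h b) || eH (h a) (h b), p a <= p b + 1 & p b <= p a + 1].
Proof. by move/fe/sp_close. Qed.

Lemma fib a b : h a = h b -> p a = p b -> k a = k b -> a = b.
Proof.
move=> H1 H2 H3; apply: fi; rewrite /h /p /k in H1 H2 H3.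
move: H1 H2 H3; case: (f a) => [[x y] z]; case: (f b) => [[x' y'] z'] /= -> /val_inj -> -> //.
Qed.

Lemma eH_neq x y : eH x y -> x != y.
Proof. by move=> E; apply/eqP => Exy; move: E; rewrite Exy (proj2 sH). Qed.

Lemma tri x y z : eH x y -> eH y z -> eH z x -> False.
Proof.
move=> e1 e2 e3; apply: noC; exists [:: x; y; z]; split => //=.
  by rewrite !inE negb_or (eH_neq e1) (eH_neq e2) eq_sym (eH_neq e3).
by rewrite e1 e2 e3.
Qed.

Lemma quad x a z b : eH x a -> eH a z -> eH z b -> eH b x -> x != z -> a != b -> False.
Proof.
move=> e1 e2 e3 e4 n1 n2; apply: noC; exists [:: x; a; z; b]; split => //=.
  rewrite !inE !negb_or (eH_neq e1) n1 (eH_neq e2) n2 (eH_neq e3) /=.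
  by rewrite eq_sym (eH_neq e4).
by rewrite e1 e2 e3 e4.
Qed.

Let x0 := h None.
Let p0 := p None.
Let c i := h (uu i).

Lemma nbr_x0 i : c i != x0 -> eH x0 (c i).
Proof.
move=> ne; case: (close (we_n_u i)) => /orP [E|//] _ _.
by move: ne; rewrite eq_sym E.
Qed.

Lemma wB i : c i != x0 -> c (ordS i) != x0 -> c i != c (ordS i) -> h (ww i) = x0.
Proof.
move=> n1 n2 n3.
have e1 := nbr_x0 n1; have e2 := nbr_x0 n2.
have es : forall u v, eH u v -> eH v u by move=> u v; rewrite (proj1 sH).
case: (close (we_u_w i)) => C1 _ _; case: (close (we_w_us i)) => C2 _ _.
rewrite -/(c i) in C1; rewrite -/(c (ordS i)) in C2.
set z := h (ww i) in C1 C2 *.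
case: (eqVneq z x0) => // nz; exfalso.
case: (eqVneq z (c i)) => [Ez|nzi].
- move: C2; rewrite Ez (negbTE n3) /= => e3.
  exact: tri e1 e3 (es _ _ e2).
- move: C1; rewrite eq_sym (negbTE nzi) /= => e4.
  case/orP: C2 => [/eqP Ez2|e5].
  + by move: e4; rewrite Ez2 => e4; exact: tri e1 e4 (es _ _ e2).
  + by apply: (quad e1 e4 e5 (es _ _ e2)); rewrite // eq_sym.
Qed.

Definition w3 (q : nat) : 'I_3 := inord (q + 1 - p0).
Definition w5 (q : nat) : 'I_5 := inord (q + 2 - p0).

Lemma w3_inj q q' : q <= p0 + 1 -> p0 <= q + 1 -> q' <= p0 + 1 -> p0 <= q' + 1 ->
  w3 q = w3 q' -> q = q'.
Proof. move=> ? ? ? ? E; have := congr1 (@nat_of_ord _) E; rewrite /w3 !inordK; lia. Qed.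
Lemma w5_inj q q' : q <= p0 + 2 -> p0 <= q + 2 -> q' <= p0 + 2 -> p0 <= q' + 2 ->
  w5 q = w5 q' -> q = q'.
Proof. move=> ? ? ? ? E; have := congr1 (@nat_of_ord _) E; rewrite /w5 !inordK; lia. Qed.

Lemma pu i : p (uu i) <= p0 + 1 /\ p0 <= p (uu i) + 1.
Proof. by case: (close (we_n_u i)). Qed.
Lemma pw i : p (ww i) <= p0 + 2 /\ p0 <= p (ww i) + 2.
Proof. case: (close (we_w_u i)) => _ ? ?; case: (pu i) => ? ?; split; lia. Qed.


Lemma cardA : #|[set i | c i == x0]| <= 3 * l.
Proof.
apply: (@card_inj _ _ _ _ (fun i => (w3 (p (uu i)), k (uu i)))) => i j.
rewrite !inE => /eqP Hi /eqP Hj [E1 E2].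
case: (pu i) => ? ?; case: (pu j) => ? ?.
apply: uu_inj; apply: fib => //; first by rewrite -/(c i) -/(c j) Hi Hj.
exact: w3_inj E1.
Qed.

Lemma cardA' : #|[set i | c (ordS i) == x0]| <= 3 * l.
Proof.
apply: (@card_inj _ _ _ _ (fun i => (w3 (p (uu (ordS i))), k (uu (ordS i))))) => i j.
rewrite !inE => /eqP Hi /eqP Hj [E1 E2].
case: (pu (ordS i)) => ? ?; case: (pu (ordS j)) => ? ?.
apply: ordS_inj; apply: uu_inj; apply: fib => //; first by rewrite -/(c (ordS i)) -/(c (ordS j)) Hi Hj.
exact: w3_inj E1.
Qed.

Lemma cardB : #|[set i | [&& c i != x0, c (ordS i) != x0 & c i != c (ordS i)]]| <= 5 * l.
Proof.
apply: (@card_inj _ _ _ _ (fun i => (w5 (p (ww i)), k (ww i)))) => i j.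
rewrite !inE => /and3P [a1 a2 a3] /and3P [b1 b2 b3] [E1 E2].
case: (pw i) => ? ?; case: (pw j) => ? ?.
apply: ww_inj; apply: fib => //; first by rewrite (wB a1 a2 a3) (wB b1 b2 b3).
exact: w5_inj E1.
Qed.

Definition Bd := [set i | c i != c (ordS i)].

Lemma cardBd : #|Bd| <= 11 * l.
Proof.
set A := [set i | c i == x0]; set A' := [set i | c (ordS i) == x0].
set B := [set i | [&& c i != x0, c (ordS i) != x0 & c i != c (ordS i)]].
have sub : Bd \subset A :|: A' :|: B.
  apply/subsetP => i; rewrite !inE => ne.
  by case: (c i == x0); case: (c (ordS i) == x0); rewrite ?orbT ?ne.
apply: leq_trans (subset_leq_card sub) _.
apply: leq_trans (leq_card_setU _ _) _.
apply: leq_trans (leq_add (leq_card_setU _ _) (leqnn _)) _.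
have := cardA; have := cardA'; have := cardB; rewrite -/A -/A' -/B; lia.
Qed.

Lemma bound : d <= (11 * l + 1) * 3 * l.
Proof.
have dm : d.-1 < d by lia.
pose lst := Ordinal dm.
pose bm i := [arg max_(j > i | c j == c i) (j : nat)].
have bm1 : forall i, c (bm i) = c i.
  by move=> i; rewrite /bm; case: arg_maxnP => //= b /eqP.
have bm2 : forall i, bm i \in Bd :|: [set lst].
  move=> i; rewrite /bm; case: arg_maxnP => //= b /eqP Pb Hmax.
  rewrite !inE; case: (eqVneq (val b) d.-1) => [E|E].
    by rewrite orbC; apply/orP; left; apply/eqP; apply: val_inj.
  apply/orP; left; rewrite Pb; apply/negP => /eqP Hc.
  have := Hmax (ordS b); rewrite Hc eqxx => /(_ isT).
  rewrite ordS_val; move: E; case: b {Pb Hmax Hc} => b Hb /= E; case: eqP => H; lia.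
pose G i := (bm i, w3 (p (uu i)), k (uu i)).
have Gi : injective G.
  move=> i j [E0 E1 E2].
  case: (pu i) => ? ?; case: (pu j) => ? ?.
  apply: uu_inj; apply: fib => //; first by rewrite -/(c i) -/(c j) -bm1 E0 bm1.
  exact: w3_inj E1.
have : #|G @: setT| <= #|setX (setX (Bd :|: [set lst]) [set: 'I_3]) [set: 'I_l]|.
  apply: subset_leq_card; apply/subsetP => y /imsetP [i _ ->].
  by rewrite !in_setX bm2 !inE.
rewrite card_imset // cardsT card_ord !cardsX !cardsT !card_ord.
have := cardBd; have := leq_card_setU Bd [set lst]; rewrite cards1.
move=> [H1 _] H2 H3; apply: leq_trans H3 _.
apply: leq_mul => //; apply: leq_mul => //; lia.
Qed.
End E.

From Stdlib Require Import Classical.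

Theorem corollary12 (l : nat) (hl : 0 < l) :
  exists (V : finType) (eG : rel V),
    squaregraph eG /\
    forall (VH : finType) (eH : rel VH) (n : nat),
      simple_graph eH ->
      subgraph_iso eG (strong_prod (strong_prod eH (path_graph n)) (complete_graph l)) ->
      has_cycle_le eH 6.
Proof.
have hd : 3 < 40 * l * l by nia.
exists (VW (40 * l * l)), (@we _); split; first exact: wheel_sq.
move=> VH eH n sH [f [fi fe]].
apply: NNPP => noC.
have h1 : 1 < 40 * l * l by nia.
have := bound h1 sH noC fi fe.
nia.
Qed.
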